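(* The following formulas define an action of $\mathscr H$ on $\mathscr C$, and the injective map $r^*:K_H(\mathrm{Gr})\to\mathscr C$ intertwines the $\mathscr H$-action on $K_H(\mathrm{Gr})$ with it: for $f\in\mathbb C(P)$, $\beta\in Q^\vee$, $i\in I$, $\mu\in P$, $$D_0(f\otimes t_\beta)=\frac{f}{1-e^{-\vartheta}}\otimes t_\beta-\frac{e^{-\vartheta}s_\vartheta(f)}{1-e^{-\vartheta}}\otimes t_{s_\vartheta(\beta-\vartheta^\vee)},$$ $$D_i(f\otimes t_\beta)=\frac{f}{1-e^{\alpha_i}}\otimes t_\beta-\frac{e^{\alpha_i}s_i(f)}{1-e^{\alpha_i}}\otimes t_{s_i\beta},\qquad e^\mu(f\otimes t_\beta)=e^\mu f\otimes t_\beta.$$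
   Context: $G$ is a connected, simply connected simple algebraic group over $\mathbb C$, with Borel $B$, maximal torus $H$, Weyl group $W$ with longest element $w_0$, weight lattice $P$, simple roots $\alpha_i$ ($i\in I$), highest root $\vartheta$ with coroot $\vartheta^\vee$ and reflection $s_\vartheta$, coroot lattice $Q^\vee$. $W_{\mathrm{af}}=W\ltimes Q^\vee$ with translations $t_\beta$, a Coxeter group generated by $s_i$, $i\in I_{\mathrm{af}}=I\cup\{0\}$, $s_\vartheta s_0=t_{-\vartheta^\vee}$; it acts on $P$ through $W_{\mathrm{af}}\to W$. $\mathbb CP$ is the group algebra of $P$, $\mathbb C(P)$ its fraction field. Nil-DAHA $\mathscr H$: generated by $e^\lambda$, $D_i$ ($i\in I_{\mathrm{af}}$) with $e^{\lambda+\mu}=e^\lambda e^\mu$, $D_i^2=D_i$, braid relations of $W_{\mathrm{af}}$, $D_ie^\lambda-e^{s_i\lambda}D_i=\frac{e^\lambda-e^{s_i\lambda}}{1-e^{\alpha_i}}$ ($i\in I$), $D_0e^\lambda-e^{s_\vartheta\lambda}D_0=\frac{e^\lambda-e^{s_\vartheta\lambda}}{1-e^{-\vartheta}}$; $D_w$ is the product along a reduced word. $\mathscr A=\mathbb C(P)\otimes\mathbb CW_{\mathrm{af}}$ with $(f\otimes w)(g\otimes v)=f\,w(g)\otimes wv$; embedding $\iota^*:\mathscr H\to\mathscr A$: $e^\lambda\mapsto e^\lambda\otimes1$, $D_i\mapsto\frac1{1-e^{\alpha_i}}\otimes1-\frac{e^{\alpha_i}}{1-e^{\alpha_i}}\otimes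 s_i$ ($i\in I$), $D_0\mapsto\frac1{1-e^{-\vartheta}}\otimes1-\frac{e^{-\vartheta}}{1-e^{-\vartheta}}\otimes s_0$. $\mathrm{Gr}=G(\!(z)\!)/G[\![z]\!]$ with Iwahori-orbit closures $\mathrm{Gr}_\beta$ ($\beta\in Q^\vee$). $K_H(\mathrm{Gr})=\bigoplus_\beta\mathbb CP[\mathcal O_{\mathrm{Gr}_\beta}]$ is identified with the left ideal $\mathscr HD_{w_0}$ via $e^\lambda[\mathcal O_{\mathrm{Gr}_\beta}]\mapsto e^\lambda D_{t_\beta}D_{w_0}$; $\mathscr H$ acts by left multiplication. $\mathscr C=\mathbb C(P)\otimes\mathbb CQ^\vee\subset\mathscr A$; $\mathsf{pr}:\mathscr A\to\mathscr C$, $f\otimes t_\beta w\mapsto f\otimes t_\beta$ ($w\in W$). $r^*:=\mathsf{pr}\circ\iota^*:K_H(\mathrm{Gr})\to\mathscr C$, which is injective. *)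

(* Defs.v *)
From HB Require Import structures.
From mathcomp Require Import all_boot all_order all_algebra.
From mathcomp Require Import fraction mpoly complex Rstruct.
Set Implicit Arguments.
Unset Strict Implicit.
Unset Printing Implicit Defensive.
Import GRing.Theory.
Local Open Scope ring_scope.

Definition CC : fieldType := complex Rdefinitions.R.

(* The root datum of the simply connected simple group G of
   rank n is encoded by its Cartan matrix Cm : 'M[int]_n with
   Cm i j = <alpha_i^vee, alpha_j>.
   - weight lattice P = 'cV[int]_n, coordinates in the basis of fundamental
     weights (so <alpha_i^vee, lambda> = lambda i 0);
   - coroot lattice Q^vee = 'cV[int]_n, coordinates in the basis of simple
     coroots (alpha_i^vee = delta_mx i 0);
   - pairing <beta, lambda> = sum_k beta_k lambda_k;
   - simple root alpha_j = col j Cm. *)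

Notation "x %:F" := (@FracField.tofrac _ x).

Definition CP (n : nat) : fieldType := {fraction {mpoly CC[n]}}.

(* e^lambda in C(P) = C(x_1,...,x_n), x_j = e^{omega_j} *)
Definition epow (n : nat) (l : 'cV[int]_n) : CP n :=
  \prod_(j < n) (((('X_j : {mpoly CC[n]}))%:F : CP n) ^ (l j 0)).

(* action of an (integer) matrix M on P (lambda |-> M lambda), extended to a
   ring map on C(P): e^lambda |-> e^{M lambda}. *)
Definition wact (n : nat) (M : 'M[int]_n) (f : CP n) : CP n :=
  let h := fun j : 'I_n => epow (M *m delta_mx j 0) in
  let c := fun a : CC => ((a%:MP : {mpoly CC[n]})%:F : CP n) in
  let r := repr f in
  mmap c h (\n_r) / mmap c h (\d_r).

Definition alpha (n : nat) (Cm : 'M[int]_n) (i : 'I_n) : 'cV[int]_n := col i Cm.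

Definition sP (n : nat) (Cm : 'M[int]_n) (i : 'I_n) : 'M[int]_n :=
  1%:M - alpha Cm i *m delta_mx 0 i.
Definition sQ (n : nat) (Cm : 'M[int]_n) (i : 'I_n) : 'M[int]_n :=
  (sP Cm i)^T.

Definition reflP (n : nat) (th thv : 'cV[int]_n) : 'M[int]_n :=
  1%:M - th *m thv^T.
Definition reflQ (n : nat) (th thv : 'cV[int]_n) : 'M[int]_n :=
  1%:M - thv *m th^T.

Definition wprod (n : nat) (Cm : 'M[int]_n) (w : seq 'I_n) : 'M[int]_n :=
  foldr (fun i M => sP Cm i *m M) 1%:M w.
Definition wprodQ (n : nat) (Cm : 'M[int]_n) (w : seq 'I_n) : 'M[int]_n :=
  foldr (fun i M => sQ Cm i *m M) 1%:M w.

(* Cartan matrix of a simply connected simple group: generalized Cartan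
   matrix, indecomposable, with finite Weyl group (= finite type). *)
Definition simple_cartan (n : nat) (Cm : 'M[int]_n) : Prop :=
  (0 < n)%N /\
  [/\ forall i, Cm i i = 2,
      forall i j, i != j -> Cm i j <= 0,
      forall i j, (Cm i j == 0) = (Cm j i == 0),
      (forall J : {set 'I_n},
         (forall i j, i \in J -> j \notin J -> Cm i j = 0) ->
         J = set0 \/ J = setT)
    & exists s : seq 'M[int]_n, forall w, wprod Cm w \in s].

(* roots = W-orbits of simple roots *)
Definition is_root (n : nat) (Cm : 'M[int]_n) (g : 'cV[int]_n) : Prop :=
  exists (w : seq 'I_n) (i : 'I_n), g = wprod Cm w *m alpha Cm i.

Definition highest_root (n : nat) (Cm : 'M[int]_n) (th : 'cV[int]_n) : Prop :=
  is_root Cm th /\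
  forall g, is_root Cm g ->
    exists c : 'cV[int]_n, (forall k, 0 <= c k 0) /\ th - g = Cm *m c.
Definition coroot_of (n : nat) (Cm : 'M[int]_n) (th thv : 'cV[int]_n) : Prop :=
  exists (w : seq 'I_n) (i : 'I_n),
    th = wprod Cm w *m alpha Cm i /\ thv = wprodQ Cm w *m delta_mx i 0.

Definition reduced_word (n : nat) (Cm : 'M[int]_n) (w : seq 'I_n) : Prop :=
  forall w', wprod Cm w' = wprod Cm w -> (size w <= size w')%N.
Definition longest_word (n : nat) (Cm : 'M[int]_n) (w : seq 'I_n) : Prop :=
  reduced_word Cm w /\
  forall w', reduced_word Cm w' -> (size w' <= size w)%N.

(* an element of W_af: (M, N, beta) stands for t_beta w, where w acts on P
   by M and on Q^vee by N. *)
Definition waf (n : nat) := ('M[int]_n * 'M[int]_n * 'cV[int]_n)%type.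
Definition waf1 (n : nat) : waf n := (1%:M, 1%:M, 0).
Definition wafmul (n : nat) (x y : waf n) : waf n :=
  (x.1.1 *m y.1.1, x.1.2 *m y.1.2, x.2 + x.1.2 *m y.2).

(* elements of A as formal sums  sum_k f_k (x) x_k *)
Definition Aelt (n : nat) := seq (CP n * waf n).
Definition Amul (n : nat) (s t : Aelt n) : Aelt n :=
  [seq (p.1 * wact p.2.1.1 q.1, wafmul p.2 q.2) | p <- s, q <- t].
Definition Acoef (n : nat) (s : Aelt n) (x : waf n) : CP n :=
  \sum_(p <- s | p.2 == x) p.1.

(* elements of C = C(P) (x) C Q^vee as formal sums sum_k f_k (x) t_{beta_k} *)
Definition Celt (n : nat) := seq (CP n * 'cV[int]_n).
Definition Ccoef (n : nat) (s : Celt n) (b : 'cV[int]_n) : CP n :=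
  \sum_(p <- s | p.2 == b) p.1.

Definition prA (n : nat) (s : Aelt n) : Celt n := [seq (p.1, p.2.2) | p <- s].

(* ---- noncommutative C-algebra expressions in the generators of the
   nil-DAHA: e^lambda and D_i, i in I_af = option 'I_n (None = 0) ---- *)
Inductive hexpr (n : nat) : Type :=
| He of 'cV[int]_n
| HD of option 'I_n
| H1
| Hadd of hexpr n & hexpr n
| Hscale of CC & hexpr n
| Hmul of hexpr n & hexpr n.

Section Embedding.
Variables (n : nat) (Cm : 'M[int]_n) (th thv : 'cV[int]_n).

Definition cst (c : CC) : CP n := ((c%:MP : {mpoly CC[n]})%:F).

Definition iota_gen_D (i : option 'I_n) : Aelt n :=
  match i with
  | Some i => let a := epow (alpha Cm i) in
      [:: (1 / (1 - a), waf1 n); (- (a / (1 - a)), (sP Cm i, sQ Cm i, 0))]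
  | None => let a := epow (- th) in
      (* s_0 = s_theta t_{-theta^vee} *)
      [:: (1 / (1 - a), waf1 n);
          (- (a / (1 - a)),
           (reflP th thv, reflQ th thv, reflQ th thv *m (- thv)))]
  end.

Fixpoint iotaA (E : hexpr n) : Aelt n :=
  match E with
  | He l => [:: (epow l, waf1 n)]
  | HD i => iota_gen_D i
  | H1 => [:: (1, waf1 n)]
  | Hadd E1 E2 => iotaA E1 ++ iotaA E2
  | Hscale c E1 => [seq (cst c * p.1, p.2) | p <- iotaA E1]
  | Hmul E1 E2 => Amul (iotaA E1) (iotaA E2)
  end.

Definition phi_gen_D (i : option 'I_n) (p : CP n * 'cV[int]_n) : Celt n :=
  let f := p.1 in let b := p.2 in
  match i with
  | Some i => let a := epow (alpha Cm i) in
      [:: (f / (1 - a), b); (- (a * wact (sP Cm i) f / (1 - a)), sQ Cm i *m b)]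
  | None => let a := epow (- th) in
      [:: (f / (1 - a), b);
          (- (a * wact (reflP th thv) f / (1 - a)), reflQ th thv *m (b - thv))]
  end.
Definition phi_gen_e (l : 'cV[int]_n) (p : CP n * 'cV[int]_n) : Celt n :=
  [:: (epow l * p.1, p.2)].

Definition linext (g : CP n * 'cV[int]_n -> Celt n) (s : Celt n) : Celt n :=
  flatten (map g s).

Fixpoint phiC (E : hexpr n) (s : Celt n) : Celt n :=
  match E with
  | He l => linext (phi_gen_e l) s
  | HD i => linext (phi_gen_D i) s
  | H1 => s
  | Hadd E1 E2 => phiC E1 s ++ phiC E2 s
  | Hscale c E1 => [seq (cst c * p.1, p.2) | p <- phiC E1 s]
  | Hmul E1 E2 => phiC E1 (phiC E2 s)
  end.

Definition Dword (w : seq 'I_n) : hexpr n :=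
  foldr (fun i E => Hmul (HD (Some i)) E) (@H1 n) w.

End Embedding.

(* Main.v *)
Require Import Defs.
From HB Require Import structures.
From mathcomp Require Import all_boot all_order all_algebra.
From mathcomp Require Import fraction mpoly complex Rstruct.
From mathcomp Require Import generic_quotient ring.
Set Implicit Arguments.
Unset Strict Implicit.
Unset Printing Implicit Defensive.
Import GRing.Theory Num.Theory.
Local Open Scope ring_scope.

Lemma fracE (R : idomainType) (f : {fraction R}) :
  f = (\n_(repr f))%:F / (\d_(repr f))%:F.
Proof.
have hd := denom_ratioP (repr f).
apply: (@mulIf _ (\d_(repr f))%:F); first by rewrite tofrac_eq0.
rewrite mulfVK ?tofrac_eq0 //.
have fx : f = \pi_({fraction R})%qT (repr f) by rewrite reprK.
move: hd; set x := repr f => hd.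
rewrite {1}fx.
unlock FracField.tofrac.
have e := FracField.pi_mul x (Ratio \d_x 1).
transitivity (\pi_({fraction R})%qT (FracField.mulf x (Ratio \d_x 1))); first exact: (esym e).
apply/eqmodP => /=; rewrite /FracField.equivf /FracField.mulf.
rewrite !numden_Ratio ?mulf_neq0 ?oner_neq0 //.
by rewrite !mulr1 mulrC.
Qed.

Section W.
Variable n : nat.
Local Notation RR := {mpoly CC[n]}.
Local Notation FF := (CP n).

Definition xj (j : 'I_n) : FF := (('X_j : RR))%:F.
Lemma xj_neq0 j : xj j != 0.
Proof.
rewrite /xj tofrac_eq0; apply/negP => /eqP h.
by have := (@mcoeffXU n CC j j); rewrite h mcoeff0 eqxx => /eqP; rewrite eq_sym oner_eq0.
Qed.

Lemma epowE (l : 'cV[int]_n) : epow l = \prod_(j < n) xj j ^ (l j 0).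
Proof. by []. Qed.

Lemma epow0 : epow (0 : 'cV[int]_n) = 1.
Proof. by rewrite epowE big1 // => j _; rewrite mxE. Qed.

Lemma epowD (u v : 'cV[int]_n) : epow (u + v) = epow u * epow v.
Proof.
rewrite !epowE -big_split /=; apply: eq_bigr => j _.
by rewrite mxE expfzDr // xj_neq0.
Qed.

Lemma epowZ (z : int) (u : 'cV[int]_n) : epow (z *: u) = epow u ^ z.
Proof.
rewrite !epowE.
have -> : (\prod_(j < n) xj j ^ u j 0) ^ z = \prod_(j < n) (xj j ^ u j 0) ^ z.
  elim: (index_enum _) => [|j r IH]; first by rewrite !big_nil exp1rz.
  by rewrite !big_cons expfzMl IH.
by apply: eq_bigr => j _; rewrite mxE exprz_exp mulrC.
Qed.

Lemma epow_neq0 (u : 'cV[int]_n) : epow u != 0.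
Proof.
rewrite epowE; apply/prodf_neq0 => j _; exact/expfz_neq0/xj_neq0.
Qed.

Lemma epow_sum (I : Type) (r : seq I) (P : pred I) (F : I -> 'cV[int]_n) :
  epow (\sum_(i <- r | P i) F i) = \prod_(i <- r | P i) epow (F i).
Proof. exact: (big_morph _ epowD epow0). Qed.

Lemma epow_delta (j : 'I_n) : epow (delta_mx j 0) = xj j.
Proof.
rewrite epowE (bigD1 j) //= big1 ?mulr1 => [|k kj]; first by rewrite mxE !eqxx expr1z.
by rewrite mxE (negbTE kj) expr0z.
Qed.

End W.


Section W.
Variable n : nat.
Local Notation RR := {mpoly CC[n]}.
Local Notation FF := (CP n).
Definition cC : {rmorphism CC -> FF} := (@FracField.tofrac RR) \o (@mpolyC n CC).
Definition hM (M : 'M[int]_n) (j : 'I_n) : FF := epow (M *m delta_mx j 0).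
Definition phi (M : 'M[int]_n) (p : RR) : FF := mmap cC (hM M) p.
Lemma wactE0 M f : wact M f = phi M (\n_(repr f)) / phi M (\d_(repr f)).
Proof. by []. Qed.
Lemma phiD M : {morph phi M : x y / x + y}. Proof. exact: mmapD. Qed.
Lemma phiM M : {morph phi M : x y / x * y}. Proof. exact: (mmap_is_multiplicative _ _).1. Qed.
Lemma phi1 M : phi M 1 = 1. Proof. exact: (mmap_is_multiplicative _ _).2. Qed.
Lemma phi0 M : phi M 0 = 0. Proof. exact: mmap0. Qed.
Lemma phi_C M a : phi M a%:MP = (a%:MP : RR)%:F. Proof. exact: mmapC. Qed.
End W.


Section W.
Variable n : nat.
Local Notation RR := {mpoly CC[n]}.
Local Notation FF := (CP n).

Definition mv (m : 'X_{1..n}) : 'cV[int]_n := \col_i ((m i)%:Z).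

Lemma mulmx_colE (M : 'M[int]_n) (v : 'cV[int]_n) :
  M *m v = \sum_(i < n) v i 0 *: (M *m delta_mx i 0).
Proof.
rewrite {1}[v]matrix_sum_delta mulmx_sumr; apply: eq_bigr => i _.
by rewrite big_ord1 -scalemxAr.
Qed.

Lemma epow_mul (M : 'M[int]_n) (v : 'cV[int]_n) :
  epow (M *m v) = \prod_(i < n) hM M i ^ (v i 0).
Proof.
rewrite mulmx_colE epow_sum; apply: eq_bigr => i _; by rewrite epowZ.
Qed.

Lemma mmap1_epow (M : 'M[int]_n) m : mmap1 (hM M) m = epow (M *m mv m).
Proof.
rewrite epow_mul /mmap1; apply: eq_bigr => i _; by rewrite mxE.
Qed.

Lemma phiE M p : phi M p = \sum_(m <- msupp p) cC n p@_m * epow (M *m mv m).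
Proof. by rewrite /phi /mmap; apply: eq_bigr => m _; rewrite mmap1_epow. Qed.

Definition good (M : 'M[int]_n) := exists M', M' *m M = 1%:M.

Lemma phi_neq0 M p : good M -> p != 0 -> phi M p != 0.
Proof.
move=> [M' HM] pn0.
set S := msupp p.
pose y m := M *m mv m.
pose K : 'cV[int]_n := \col_j \sum_(m <- S) (absz (y m j 0))%:Z.
have Kge : forall m, m \in S -> forall j, 0 <= (y m + K) j 0.
  move=> m mS j.
  have -> : (y m + K) j 0 = y m j 0 + K j 0 by rewrite mxE.
  rewrite [K j 0]mxE (bigD1_seq m) ?msupp_uniq //=.
  have h1 : 0 <= \sum_(i <- S | i != m) (absz (y i j 0))%:Z by apply: sumr_ge0.
  have h2 : - y m j 0 <= (absz (y m j 0))%:Z by rewrite abszE -normrN ler_norm.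
  rewrite addrA addr_ge0 //; move: h2; rewrite -subr_ge0 opprK; by rewrite addrC.
pose g m : 'X_{1..n} := [multinom absz ((y m + K)%R j 0%R) | j < n].
have gE : forall m, m \in S -> epow (y m + K) = ('X_[g m] : RR)%:F.
  move=> m mS; rewrite epowE mpolyXE_id rmorph_prod; apply: eq_bigr => j _.
  by rewrite mnmE rmorphXn -(gez0_abs (Kge m mS j)).
have ginj : {in S &, injective g}.
  move=> m1 m2 m1S m2S /mnmP e.
  have ey : y m1 = y m2.
    apply: (addIr K); apply/matrixP => j k; rewrite (ord1 k).
    have := e j; rewrite !mnmE => e'.
    by rewrite -(gez0_abs (Kge _ m1S j)) -(gez0_abs (Kge _ m2S j)) e'.
  have emv : mv m1 = mv m2.
    by rewrite -[mv m1]mul1mx -[mv m2]mul1mx -HM -!mulmxA -/(y m1) -/(y m2) ey.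
  apply/mnmP => i; have := congr1 (fun A : 'cV[int]_n => A i 0) emv; rewrite !mxE.
  by case.
pose q : RR := \sum_(m <- S) p@_m *: 'X_[g m].
have phiK : phi M p * epow K = q%:F.
  rewrite phiE mulr_suml /q rmorph_sum; apply: eq_big_seq => m mS.
  by rewrite -mulrA -epowD gE // -mul_mpolyC rmorphM.
have [m0 m0S] : exists m0, m0 \in S.
  case eS: S => [|m0 s]; last by exists m0; rewrite inE eqxx.
  move: pn0; rewrite [p]mpolyE -/S eS big_nil; by rewrite eqxx.
have qc : q@_(g m0) = p@_m0.
  rewrite /q raddf_sum (bigD1_seq m0) ?msupp_uniq //= big1_seq.
    by rewrite mcoeffZ mcoeffX eqxx mulr1 addr0.
  move=> m /andP [mm0 mS]; rewrite mcoeffZ mcoeffX.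
  case: eqP => [/ginj h|]; last by rewrite mulr0.
  by rewrite h ?eqxx in mm0.
apply/negP => /eqP h0.
move: phiK; rewrite h0 mul0r => /esym /eqP; rewrite tofrac_eq0 => /eqP q0.
by move: m0S; rewrite mcoeff_msupp -qc q0 mcoeff0 eqxx.
Qed.
End W.


Section W.
Variable n : nat.
Local Notation RR := {mpoly CC[n]}.
Local Notation FF := (CP n).

Lemma tofrac_neq0 (d : RR) : d != 0 -> d%:F != 0 :> FF.
Proof. by rewrite tofrac_eq0. Qed.

Lemma wactE (M : 'M[int]_n) (a d : RR) : good M -> d != 0 ->
  wact M (a%:F / d%:F) = phi M a / phi M d.
Proof.
move=> gM dn0; rewrite wactE0.
set f := a%:F / d%:F.
have hf := fracE f.
have dn0' := denom_ratioP (repr f).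
move: hf; rewrite {1}/f => /eqP; rewrite eqr_div ?tofrac_neq0 // -!tofracM tofrac_eq => /eqP e.
apply/eqP; rewrite eqr_div ?phi_neq0 // -!phiM.
by rewrite -e.
Qed.

Lemma wact_frac (M : 'M[int]_n) (a : RR) : good M -> wact M a%:F = phi M a.
Proof.
move=> gM; have := wactE a gM (oner_neq0 RR).
by rewrite tofrac1 divr1 phi1 divr1.
Qed.

Lemma wact0 (M : 'M[int]_n) : good M -> wact M 0 = 0.
Proof. by move=> gM; rewrite -tofrac0 wact_frac // phi0. Qed.
Lemma wact1 (M : 'M[int]_n) : good M -> wact M 1 = 1.
Proof. by move=> gM; rewrite -tofrac1 wact_frac // phi1. Qed.

Lemma wactD (M : 'M[int]_n) : good M -> {morph wact M : x y / x + y}.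
Proof.
move=> gM x y.
rewrite [x]fracE [y]fracE.
set a := \n_(repr x); set b := \d_(repr x).
set c := \n_(repr y); set d := \d_(repr y).
have bn0 : b != 0 := denom_ratioP _.
have dn0 : d != 0 := denom_ratioP _.
have bdn0 : b * d != 0 by rewrite mulf_neq0.
rewrite addf_div ?tofrac_neq0 // -!tofracM -tofracD !wactE // phiD !phiM.
by rewrite addf_div ?phi_neq0.
Qed.

Lemma wactM (M : 'M[int]_n) : good M -> {morph wact M : x y / x * y}.
Proof.
move=> gM x y.
rewrite [x]fracE [y]fracE.
set a := \n_(repr x); set b := \d_(repr x).
set c := \n_(repr y); set d := \d_(repr y).
have bn0 : b != 0 := denom_ratioP _.
have dn0 : d != 0 := denom_ratioP _.
have bdn0 : b * d != 0 by rewrite mulf_neq0.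
rewrite mulf_div -!tofracM !wactE // !phiM.
by rewrite mulf_div.
Qed.

Lemma wactV (M : 'M[int]_n) : good M -> {morph wact M : x / x^-1}.
Proof.
move=> gM x.
rewrite [x]fracE.
set a := \n_(repr x); set b := \d_(repr x).
have bn0 : b != 0 := denom_ratioP _.
have [->|an0] := eqVneq a 0.
  by rewrite tofrac0 mul0r invr0 (wact0 gM) invr0.
rewrite invf_div !wactE // invf_div //.
Qed.

Lemma wactC (M : 'M[int]_n) c : good M -> wact M (cC n c) = cC n c.
Proof. by move=> gM; rewrite /cC /= wact_frac // phi_C. Qed.

Lemma wact_xj (M : 'M[int]_n) j : good M -> wact M (xj j) = hM M j.
Proof.
move=> gM; rewrite /xj wact_frac //.
by rewrite /phi [LHS](mmapX _ (cC n)) mmap1U.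
Qed.

Lemma wact_exprn (M : 'M[int]_n) x k : good M -> wact M (x ^+ k) = wact M x ^+ k.
Proof.
move=> gM; elim: k => [|k IH]; first by rewrite !expr0 wact1.
by rewrite !exprS wactM // IH.
Qed.

Lemma wact_exprz (M : 'M[int]_n) x z : good M -> wact M (x ^ z) = wact M x ^ z.
Proof.
move=> gM; case: z => k; first by rewrite -!exprnP wact_exprn.
by rewrite !NegzE -!invr_expz -!exprnP wactV // wact_exprn.
Qed.

Lemma wact_prod (M : 'M[int]_n) (I : Type) (r : seq I) (P : pred I) (F : I -> FF) :
  good M -> wact M (\prod_(i <- r | P i) F i) = \prod_(i <- r | P i) wact M (F i).
Proof. move=> gM; exact: (big_morph _ (wactM gM) (wact1 gM)). Qed.

Lemma wact_sum (M : 'M[int]_n) (I : Type) (r : seq I) (P : pred I) (F : I -> FF) :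
  good M -> wact M (\sum_(i <- r | P i) F i) = \sum_(i <- r | P i) wact M (F i).
Proof. move=> gM; exact: (big_morph _ (wactD gM) (wact0 gM)). Qed.

Lemma wact_epow (M : 'M[int]_n) v : good M -> wact M (epow v) = epow (M *m v).
Proof.
move=> gM; rewrite epowE wact_prod // epow_mul; apply: eq_bigr => j _.
by rewrite wact_exprz // wact_xj.
Qed.

Lemma wact_phi (M N : 'M[int]_n) p : good M -> wact M (phi N p) = phi (M *m N) p.
Proof.
move=> gM; rewrite !phiE wact_sum //; apply: eq_bigr => m _.
by rewrite wactM // wactC // wact_epow // mulmxA.
Qed.

Lemma wact_comp (M N : 'M[int]_n) f : good M -> wact M (wact N f) = wact (M *m N) f.
Proof.
move=> gM; rewrite [wact N f]wactE0 [wact (M *m N) f]wactE0.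
by rewrite wactM // wactV // !wact_phi.
Qed.

Lemma phi_id (p : RR) : phi 1%:M p = p%:F.
Proof.
rewrite phiE [in RHS](mpolyE p) rmorph_sum; apply: eq_bigr => m _.
rewrite -mul_mpolyC rmorphM mul1mx; congr (_ * _).
rewrite epowE mpolyXE_id rmorph_prod; apply: eq_bigr => j _.
by rewrite mxE rmorphXn.
Qed.

Lemma wact_id (f : FF) : wact 1%:M f = f.
Proof. by rewrite wactE0 !phi_id -fracE. Qed.

Lemma good1 : good (1%:M : 'M[int]_n).
Proof. by exists 1%:M; rewrite mul1mx. Qed.

Lemma goodM (M N : 'M[int]_n) : good M -> good N -> good (M *m N).
Proof.
move=> [M' hM] [N' hN]; exists (N' *m M').
by rewrite mulmxA -(mulmxA N') hM mulmx1 hN.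
Qed.
End W.


Section W.
Variable n : nat.

Lemma invol_good (A : 'M[int]_n) : A *m A = 2 *: A -> good (1%:M - A).
Proof.
move=> AA; exists (1%:M - A).
rewrite mulmxBl mul1mx mulmxBr mulmx1 AA.
apply/matrixP => a b; rewrite !mxE; ring.
Qed.

Lemma rank1_sq (u v : 'cV[int]_n) : v^T *m u = 2%:M -> (u *m v^T) *m (u *m v^T) = 2 *: (u *m v^T).
Proof.
move=> h; by rewrite mulmxA -(mulmxA u) h mul_mx_scalar -scalemxAl.
Qed.

Variable Cm : 'M[int]_n.
Hypothesis Cii : forall i, Cm i i = 2.

Lemma delta_alpha i : (delta_mx i 0 : 'cV[int]_n)^T *m alpha Cm i = 2%:M.
Proof.
rewrite trmx_delta -rowE; apply/matrixP => a b; rewrite (ord1 a) (ord1 b) !mxE.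
by rewrite Cii.
Qed.


Lemma sP_sq i : sP Cm i *m sP Cm i = 1%:M.
Proof.
rewrite /sP -trmx_delta.
set A := alpha Cm i *m _.
have AA : A *m A = 2 *: A by apply/rank1_sq/delta_alpha.
rewrite mulmxBl mul1mx mulmxBr mulmx1 AA.
apply/matrixP => a b; rewrite !mxE; ring.
Qed.

Lemma good_sP i : good (sP Cm i).
Proof. by exists (sP Cm i); rewrite sP_sq. Qed.

Lemma wQw w : (wprodQ Cm w)^T *m wprod Cm w = 1%:M.
Proof.
elim: w => [|i w IH] /=; first by rewrite trmx1 mul1mx.
rewrite trmx_mul /sQ trmxK. by rewrite -mulmxA (mulmxA (sP Cm i)) sP_sq mul1mx IH.
Qed.

Variables th thv : 'cV[int]_n.
Hypothesis hco : coroot_of Cm th thv.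

Lemma thv_th : thv^T *m th = 2%:M.
Proof.
case: hco => w [i [-> ->]].
by rewrite trmx_mul mulmxA -(mulmxA _ _ (wprod Cm w)) wQw mulmx1 delta_alpha.
Qed.

Lemma good_reflP : good (reflP th thv).
Proof. apply/invol_good/rank1_sq/thv_th. Qed.
End W.


Section Lin.
Variable F : zmodType.
Variable K : eqType.

Definition coef (s : seq (F * K)) (k : K) : F := \sum_(p <- s | p.2 == k) p.1.

Lemma coef_key (h : K -> F -> F) (S : seq K) (s : seq (F * K)) :
  (forall k x y, h k (x + y) = h k x + h k y) ->
  uniq S -> {subset map snd s <= S} ->
  \sum_(p <- s) h p.2 p.1 = \sum_(k <- S) h k (coef s k).
Proof.
move=> hD uS.
have h0 : forall k, h k 0 = 0.
  by move=> k; apply: (@addrI _ (h k 0)); rewrite -hD !addr0.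
elim: s => [|p s IH] sub.
  by rewrite big_nil big1 // => k _; rewrite /coef big_nil h0.
rewrite big_cons IH; last by move=> x xs; apply: sub; rewrite inE xs orbT.
have pS : p.2 \in S by apply: sub; rewrite inE eqxx.
have hc : forall k, h k (coef (p :: s) k) = h k (if p.2 == k then p.1 else 0) + h k (coef s k).
  by move=> k; rewrite /coef big_cons; case: (p.2 == k); rewrite ?h0 ?add0r ?hD.
under [in RHS]eq_bigr => k _ do rewrite hc.
rewrite big_split /=; congr (_ + _).
rewrite (bigD1_seq p.2) //= eqxx big1 ?addr0 //.
by move=> k /negbTE pk; rewrite eq_sym pk h0.
Qed.
Arguments coef_key : clear implicits.

Lemma coef_lin (h : K -> F -> F) (s s' : seq (F * K)) :
  (forall k x y, h k (x + y) = h k x + h k y) ->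
  (forall k, coef s k = coef s' k) ->
  \sum_(p <- s) h p.2 p.1 = \sum_(p <- s') h p.2 p.1.
Proof.
move=> hD e.
set S := undup (map snd (s ++ s')).
have uS : uniq S := undup_uniq _.
have sub1 : {subset map snd s <= S}.
  by move=> x xs; rewrite mem_undup map_cat mem_cat xs.
have sub2 : {subset map snd s' <= S}.
  by move=> x xs; rewrite mem_undup map_cat mem_cat xs orbT.
rewrite (coef_key h S s hD uS sub1) (coef_key h S s' hD uS sub2).
by apply: eq_bigr => k _; rewrite e.
Qed.
End Lin.

Lemma big_ap (A B X : Type) (V : nmodType) (s : seq A) (t : seq B) (f : A -> B -> X) (G : X -> V) :
  \sum_(x <- [seq f p q | p <- s, q <- t]) G x = \sum_(p <- s) \sum_(q <- t) G (f p q).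
Proof. by rewrite big_flatten big_map; apply: eq_bigr => p _; rewrite big_map. Qed.


Section Main.
Variable n : nat.
Variable Cm : 'M[int]_n.
Variables th thv : 'cV[int]_n.
Hypothesis Cii : forall i, Cm i i = 2.
Hypothesis hco : coroot_of Cm th thv.

Definition act (s : Aelt n) (c : Celt n) : Celt n :=
  [seq (p.1 * wact p.2.1.1 q.1, p.2.2 + p.2.1.2 *m q.2) | p <- s, q <- c].

Lemma Ccoef_act s c b : Ccoef (act s c) b =
  \sum_(p <- s) \sum_(q <- c)
     (if p.2.2 + p.2.1.2 *m q.2 == b then p.1 * wact p.2.1.1 q.1 else 0).
Proof. by rewrite /Ccoef big_mkcond big_ap. Qed.

Lemma iota_good E : {in iotaA Cm th thv E, forall p, good p.2.1.1}.
Proof.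
elim: E => [l|[i|]| |E1 IH1 E2 IH2|a E1 IH|E1 IH1 E2 IH2] p /=.
- by rewrite inE => /eqP ->; exact: good1.
- rewrite !inE => /orP [/eqP -> | /eqP ->]. exact: good1. exact: good_sP.
- by rewrite !inE => /orP [] /eqP ->; [exact: good1 | exact: (good_reflP Cii hco)].
- by rewrite inE => /eqP ->; exact: good1.
- by rewrite mem_cat => /orP [h|h]; [exact: (IH1 p h) | exact: (IH2 p h)].
- by move/mapP => [q qin ->]; exact: (IH q qin).
- move/allpairsP => [[p1 p2] [/= h1 h2 ->]] /=.
  by apply: goodM; [exact: (IH1 p1 h1) | exact: (IH2 p2 h2)].
Qed.

Lemma act_lin_c s c c' : {in s, forall p, good p.2.1.1} ->
  (forall b, Ccoef c b = Ccoef c' b) ->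
  forall b, Ccoef (act s c) b = Ccoef (act s c') b.
Proof.
move=> gs e b; rewrite !Ccoef_act; apply: eq_big_seq => p ps.
apply: (coef_lin (h := fun be x => if p.2.2 + p.2.1.2 *m be == b then p.1 * wact p.2.1.1 x else 0)).
  move=> k x y /=; case: ifP => _; last by rewrite addr0.
  by rewrite wactD ?mulrDr //; exact: gs.
exact: e.
Qed.

Lemma act_lin_s s s' c : (forall x, Acoef s x = Acoef s' x) ->
  forall b, Ccoef (act s c) b = Ccoef (act s' c) b.
Proof.
move=> e b; rewrite !Ccoef_act.
apply: (coef_lin (h := fun x g => \sum_(q <- c) if x.2 + x.1.2 *m q.2 == b then g * wact x.1.1 q.1 else 0)).
  move=> k x y /=; rewrite -big_split; apply: eq_bigr => q _ /=.
  by case: ifP => _; rewrite ?addr0 ?mulrDl.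
exact: e.
Qed.

Lemma prA_Amul s t : prA (Amul s t) = act s (prA t).
Proof.
rewrite /prA /Amul /act; elim: s => //= p s IH.
rewrite map_cat IH; congr (_ ++ _).
by rewrite -!map_comp; apply: eq_map => q.
Qed.

Lemma Ccoef_linext g (c : Celt n) b : Ccoef (linext g c) b = \sum_(q <- c) Ccoef (g q) b.
Proof. by rewrite /Ccoef /linext big_flatten big_map. Qed.

Lemma Ccoef_cons x (s : Celt n) b : Ccoef (x :: s) b = (if x.2 == b then x.1 else 0) + Ccoef s b.
Proof. by rewrite /Ccoef big_cons; case: ifP; rewrite ?add0r. Qed.

Lemma Ccoef_nil b : Ccoef [::] b = 0 :> CP n.
Proof. by rewrite /Ccoef big_nil. Qed.

Lemma Ccoef_cat s t b : Ccoef (s ++ t) b = Ccoef s b + Ccoef t b :> CP n.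
Proof. by rewrite /Ccoef big_cat. Qed.

Lemma Ccoef_scale k (s : Celt n) b :
  Ccoef [seq (k * p.1, p.2) | p <- s] b = k * Ccoef s b.
Proof. by rewrite /Ccoef big_map mulr_sumr. Qed.

Lemma key E c b :
  Ccoef (phiC Cm th thv E c) b = Ccoef (act (iotaA Cm th thv E) c) b.
Proof.
elim: E c b => [l|[i|]| |E1 IH1 E2 IH2|a E1 IH|E1 IH1 E2 IH2] c b /=.
- rewrite Ccoef_linext Ccoef_act big_seq1; apply: eq_bigr => q _ /=.
  by rewrite Ccoef_cons Ccoef_nil addr0 /= wact_id mul1mx add0r.
- rewrite Ccoef_linext Ccoef_act !big_cons big_nil addr0 -big_split.
  apply: eq_bigr => q _ /=.
  rewrite !Ccoef_cons Ccoef_nil addr0 /= wact_id mul1mx !add0r.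
  congr (_ + _); case: ifP => _ //.
    by rewrite div1r mulrC.
  by rewrite mulNr mulrAC.
- rewrite Ccoef_linext Ccoef_act !big_cons big_nil addr0 -big_split.
  apply: eq_bigr => q _ /=.
  rewrite !Ccoef_cons Ccoef_nil addr0 /= wact_id mul1mx !add0r.
  rewrite mulmxDr [reflQ th thv *m q.2 + _]addrC.
  congr (_ + _); case: ifP => _ //.
    by rewrite div1r mulrC.
  by rewrite mulNr mulrAC.
- rewrite Ccoef_act big_seq1 /Ccoef big_mkcond; apply: eq_bigr => q _ /=.
  by rewrite mul1r wact_id mul1mx add0r.
- by rewrite Ccoef_cat IH1 IH2 !Ccoef_act big_cat.
- rewrite Ccoef_scale IH !Ccoef_act big_map mulr_sumr; apply: eq_bigr => p _.
  rewrite mulr_sumr; apply: eq_bigr => q _ /=.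
  by case: ifP => _; rewrite ?mulr0 ?mulrA.
- rewrite IH1 (act_lin_c (@iota_good E1) (IH2 c)) !Ccoef_act.
  rewrite /Amul big_ap; apply: eq_big_seq => p1 p1s.
  have g1 := iota_good p1s.
  rewrite big_ap; apply: eq_bigr => p2 _; apply: eq_bigr => q _ /=.
  by rewrite mulmxDr mulmxA addrA wactM // wact_comp // mulrA.
Qed.
End Main.

Unset Implicit Arguments.

Theorem proposition2p3
  (n : nat) (Cm : 'M[int]_n) (th thv : 'cV[int]_n) (w0 : seq 'I_n) :
  simple_cartan Cm ->
  highest_root Cm th ->
  coroot_of Cm th thv ->
  longest_word Cm w0 ->
  (forall (E : hexpr n) (s s' : Celt n),
     (forall b, Ccoef s b = Ccoef s' b) ->
     forall b, Ccoef (phiC Cm th thv E s) b = Ccoef (phiC Cm th thv E s') b) /\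
  (forall (E E' : hexpr n),
     (forall x, Acoef (iotaA Cm th thv E) x = Acoef (iotaA Cm th thv E') x) ->
     forall (s : Celt n) b,
       Ccoef (phiC Cm th thv E s) b = Ccoef (phiC Cm th thv E' s) b) /\
  (forall (E F : hexpr n) b,
     Ccoef (prA (iotaA Cm th thv (Hmul E (Hmul F (Dword w0))))) b =
     Ccoef (phiC Cm th thv E (prA (iotaA Cm th thv (Hmul F (Dword w0))))) b).
Proof.
move=> hsc _ hco _.
have Cii : forall i, Cm i i = 2 by case: hsc => _ [].
split; [|split].
- move=> E s s' e b; rewrite !(key Cii hco).
  exact: (act_lin_c (iota_good Cii hco (E:=E)) e).
- move=> E E' e s b; rewrite !(key Cii hco); exact: act_lin_s.
- move=> E F b; rewrite (key Cii hco) -prA_Amul //.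
Qed.
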